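(* In every state $\mathbf{x}$ of the common-chunk-protocol Markov process (with $k\ge 2$ chunks and any $\lambda>0$) in which $S\ge 12$, the total download rate satisfies \[ r \;\ge\; \min_{1\le i\le k} \frac{S_i}{2k^3}. \]
   Context: Model: Fix an integer $k\ge 2$ (number of chunks of a file) and $\lambda>0$. There is always exactly one seed holding all $k$ chunks. Non-seed peers arrive according to a Poisson process of rate $\lambda$, each arriving with no chunks; each non-seed peer holds a subset (its profile) of $\{1,\dots,k\}$ and leaves the system immediately once it holds all $k$ chunks. The state $\mathbf{x}$ of the continuous-time Markov process is the number of non-seed peers with each profile. $S$ denotes the total number of peers present, including the seed. Each non-seed peer has an independent rate-1 Poisson clock; at each tick it draws a sample of peers independently and uniformly at random with replacement from the current $S$ peers (seed and itself included) and may instantaneously download at most one chunk that it lacks and that is held by some sampled peer (such a chunk is a ''match''). Counting draws with multiplicity, a chunk is ''rare'' in a sample of 3 draws if exactly one of the 3 draws holds it. Common chunk protocol: (i) a peer with no chunks draws 3 peers and downloads a chunk chosen uniformly among the rare matches, if there is any, otherwise nothing; (ii) a peer holding at least 1 and at most $k-2$ chunks draws 1 peer and downloads a uniformly chosen match, if any, otherwise nothing; (iii) a peer holding exactly $k-1$ chunks draws 3 peers and downloads its missing chunk only if that chunk is held by some draw and every chunk it holds is held by at least 2 of the 3 draws; otherwise nothing. Notation: $S_i$ ($1\le i\le k$) is the number of peers, including the seed, holding chunk $i$. $r=r(\mathbf{x})$ is the total rate of download events in state $\mathbf{x}$, i.e. the sum over all non-seed peers of the probability that a clock tick of that peer results in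 a download. *)

(* Defs.v *)
From HB Require Import structures.
From mathcomp Require Import all_boot all_order all_algebra.
Set Implicit Arguments. Unset Strict Implicit. Unset Printing Implicit Defensive.
Import Order.TTheory GRing.Theory Num.Theory.

(* A state of the process: x C = number of non-seed peers with profile C
   (chunks are indexed by 'I_k). *)

(* number of peers with profile A, seed included (the seed has profile setT) *)
Definition npeers (k : nat) (x : {set 'I_k} -> nat) (A : {set 'I_k}) : nat :=
  (x A + (A == setT))%N.

Definition Stot (k : nat) (x : {set 'I_k} -> nat) : nat :=
  (\sum_(A : {set 'I_k}) npeers x A)%N.

Definition Schunk (k : nat) (x : {set 'I_k} -> nat) (i : 'I_k) : nat :=
  (\sum_(A : {set 'I_k} | i \in A) npeers x A)%N.

Definition mult3 (k : nat) (i : 'I_k) (A B D : {set 'I_k}) : nat :=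
  ((i \in A) + (i \in B) + (i \in D))%N.

Definition succ_empty (k : nat) (A B D : {set 'I_k}) : bool :=
  [exists i, mult3 i A B D == 1%N].

Definition succ_last (k : nat) (C : {set 'I_k}) (A B D : {set 'I_k}) : bool :=
  [exists j, (j \notin C) && (j \in A :|: B :|: D)] &&
  [forall i, (i \in C) ==> (1 < mult3 i A B D)%N].

(* probability that a uniform sample of 3 peers (with replacement) satisfies P *)
Definition triple_prob (k : nat) (x : {set 'I_k} -> nat)
    (P : {set 'I_k} -> {set 'I_k} -> {set 'I_k} -> bool) : rat :=
  ((\sum_(A : {set 'I_k}) \sum_(B : {set 'I_k}) \sum_(D : {set 'I_k})
      npeers x A * npeers x B * npeers x D * P A B D)%N)%:R
  / ((Stot x)%:R ^+ 3).

Definition single_prob (k : nat) (x : {set 'I_k} -> nat) (C : {set 'I_k}) : rat :=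
  ((\sum_(A : {set 'I_k} | ~~ (A \subset C)) npeers x A)%N)%:R / (Stot x)%:R.

(* probability that a clock tick of a peer with profile C yields a download *)
Definition dl_prob (k : nat) (x : {set 'I_k} -> nat) (C : {set 'I_k}) : rat :=
  if #|C| == 0%N then triple_prob x (@succ_empty k)
  else if (#|C| <= k - 2)%N then single_prob x C
  else if #|C| == (k - 1)%N then triple_prob x (succ_last C)
  else 0%R.

Definition rate (k : nat) (x : {set 'I_k} -> nat) : rat :=
  \sum_(C : {set 'I_k}) (x C)%:R * dl_prob x C.

(* Main.v *)
Require Import Defs.
From HB Require Import structures.
From mathcomp Require Import all_boot all_order all_algebra.
From mathcomp Require Import zify ring lra.
Set Implicit Arguments. Unset Strict Implicit. Unset Printing Implicit Defensive.
Import Order.TTheory GRing.Theory Num.Theory.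

Lemma sum3_prod k (n : {set 'I_k} -> nat) (U V W : pred {set 'I_k}) :
  (\sum_A \sum_B \sum_D n A * n B * n D * (U A && V B && W D))%N =
  ((\sum_(A | U A) n A) * (\sum_(B | V B) n B) * (\sum_(D | W D) n D))%N.
Proof.
rewrite !(big_mkcond U) !(big_mkcond V) !(big_mkcond W).
set Y := (\sum_i (if V i then n i else 0)). set Z := (\sum_i (if W i then n i else 0)).
rewrite -mulnA bigop.big_distrl /=; apply: eq_bigr => A _.
rewrite /Y /Z bigop.big_distrl /= bigop.big_distrr /=; apply: eq_bigr => B _.
rewrite bigop.big_distrr /= bigop.big_distrr /=; apply: eq_bigr => D _.
by case: (U A); case: (V B); case: (W D); rewrite /= ?muln0 ?mul0n ?muln1 ?mulnA.
Qed.

Lemma sum3_lb k (n : {set 'I_k} -> nat) (P : {set 'I_k} -> {set 'I_k} -> {set 'I_k} -> bool)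
  (I1 I2 I3 : {set 'I_k} -> {set 'I_k} -> {set 'I_k} -> bool) :
  (forall A B D, (I1 A B D + I2 A B D + I3 A B D <= P A B D)%N) ->
  (\sum_A \sum_B \sum_D n A * n B * n D * I1 A B D +
   \sum_A \sum_B \sum_D n A * n B * n D * I2 A B D +
   \sum_A \sum_B \sum_D n A * n B * n D * I3 A B D <=
   \sum_A \sum_B \sum_D n A * n B * n D * P A B D)%N.
Proof.
move=> H; rewrite -!big_split /=; apply: leq_sum => A _.
rewrite -!big_split /=; apply: leq_sum => B _.
rewrite -!big_split /=; apply: leq_sum => D _.
by rewrite -!mulnDr leq_mul2l H orbT.
Qed.

Lemma frac_le (a b c d : nat) : (0 < b)%N -> (0 < d)%N -> (a * d <= c * b)%N ->
  (a%:R / b%:R <= c%:R / d%:R :> rat)%R.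
Proof.
move=> hb hd h.
rewrite ler_pdivrMr ?ltr0n // mulrAC ler_pdivlMr ?ltr0n // -!natrM ler_nat.
by [].
Qed.

Lemma sum3_lb' k (n : {set 'I_k} -> nat) (P : {set 'I_k} -> {set 'I_k} -> {set 'I_k} -> bool)
  (U1 V1 W1 U2 V2 W2 U3 V3 W3 : pred {set 'I_k}) :
  (forall A B D, ((U1 A && V1 B && W1 D) + (U2 A && V2 B && W2 D) + (U3 A && V3 B && W3 D)
     <= P A B D)%N) ->
  ((\sum_(A | U1 A) n A) * (\sum_(B | V1 B) n B) * (\sum_(D | W1 D) n D) +
   (\sum_(A | U2 A) n A) * (\sum_(B | V2 B) n B) * (\sum_(D | W2 D) n D) +
   (\sum_(A | U3 A) n A) * (\sum_(B | V3 B) n B) * (\sum_(D | W3 D) n D) <=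
   \sum_A \sum_B \sum_D n A * n B * n D * P A B D)%N.
Proof.
move=> H; rewrite -!sum3_prod.
exact: (@sum3_lb _ n P (fun A B D => U1 A && V1 B && W1 D) (fun A B D => U2 A && V2 B && W2 D)
   (fun A B D => U3 A && V3 B && W3 D) H).
Qed.

Lemma dl_ge0 k (x : {set 'I_k} -> nat) C : (0 <= dl_prob x C)%R.
Proof.
rewrite /dl_prob /triple_prob /single_prob.
by repeat case: ifP => _; rewrite ?divr_ge0 ?exprn_ge0 ?ler0n.
Qed.

Lemma rate_ge k (x : {set 'I_k} -> nat) (P : pred {set 'I_k}) :
  (\sum_(C | P C) (x C)%:R * dl_prob x C <= rate x)%R.
Proof.
rewrite /rate [X in (_ <= X)%R](bigID P) /= lerDl; apply: sumr_ge0 => C _.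
by rewrite mulr_ge0 ?ler0n ?dl_ge0.
Qed.

Lemma rate_ge1 k (x : {set 'I_k} -> nat) C :
  ((x C)%:R * dl_prob x C <= rate x)%R.
Proof.
apply: le_trans (rate_ge x (pred1 C)).
by rewrite big_pred1_eq.
Qed.

Lemma Stot_eq k (x : {set 'I_k} -> nat) : (Stot x = \sum_A x A + 1)%N.
Proof.
rewrite /Stot /npeers big_split /=; congr (_ + _)%N.
rewrite (bigD1 setT) //= eqxx big1 // => A /negbTE ->; done.
Qed.

Lemma notin_ex k (C : {set 'I_k}) : (#|C| < k)%N -> exists j, j \notin C.
Proof.
move=> hC; case: (pickP (fun j => j \notin C)) => [j jC|H]; first by exists j.
suff : C = setT by move=> E; rewrite E cardsT card_ord ltnn in hC.
by apply/setP => j; rewrite inE; move: (H j); case: (j \in C).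
Qed.

Lemma empty_bound k (x : {set 'I_k} -> nat) (hk : (0 < k)%N) (i : 'I_k) :
  (3 * (Schunk x i * x set0 * x set0) <=
   \sum_A \sum_B \sum_D npeers x A * npeers x B * npeers x D * succ_empty A B D)%N.
Proof.
have n0 : npeers x set0 = x set0.
  rewrite /npeers; case: eqP => [E|]; last by rewrite addn0.
  by move: (in_setT i); rewrite -E inE.
apply: leq_trans (@sum3_lb' _ (npeers x) (@succ_empty k)
   (fun A => i \in A) (pred1 set0) (pred1 set0)
   (pred1 set0) (fun A => i \in A) (pred1 set0)
   (pred1 set0) (pred1 set0) (fun A => i \in A) _).
  rewrite /= !big_pred1_eq n0 -/(Schunk x i); lia.
move=> A B D /=.
have h0 : (i \in (set0 : {set 'I_k})) = false by rewrite inE.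
case: (eqVneq A set0) => [->|nA]; case: (eqVneq B set0) => [->|nB];
  case: (eqVneq D set0)=> [->|nD]; rewrite /= ?h0 ?andbF ?andbT ?andFb ?eqxx //=.
- case iD: (i \in D) => //=; rewrite lt0b; apply/existsP; exists i; by rewrite /mult3 iD h0.
- case iB: (i \in B) => //=; rewrite lt0b; apply/existsP; exists i; by rewrite /mult3 iB h0.
- case iA: (i \in A) => //=; rewrite lt0b; apply/existsP; exists i; by rewrite /mult3 iA h0.
Qed.

Lemma last_bound k (x : {set 'I_k} -> nat) (C0 : {set 'I_k}) (j : 'I_k) :
  j \notin C0 ->
  (3 * (x C0 * x C0 * Schunk x j) <=
   \sum_A \sum_B \sum_D npeers x A * npeers x B * npeers x D * succ_last C0 A B D)%N.
Proof.
move=> jC.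
have n0 : npeers x C0 = x C0.
  rewrite /npeers; case: eqP => [E|]; last by rewrite addn0.
  by move: jC; rewrite E in_setT.
apply: leq_trans (@sum3_lb' _ (npeers x) (succ_last C0)
   (pred1 C0) (pred1 C0) (fun A => j \in A)
   (pred1 C0) (fun A => j \in A) (pred1 C0)
   (fun A => j \in A) (pred1 C0) (pred1 C0) _).
  rewrite /= !big_pred1_eq n0 -/(Schunk x j); lia.
move=> A B D /=.
have hs : forall D : {set 'I_k}, j \in D -> succ_last C0 C0 C0 D.
  move=> D' jD; apply/andP; split.
    by apply/existsP; exists j; rewrite jC !inE jD orbT.
  apply/forallP => i; apply/implyP => iC; by rewrite /mult3 iC; case: (i \in D').
have hs2 : forall D : {set 'I_k}, j \in D -> succ_last C0 C0 D C0.
  move=> D' jD; apply/andP; split.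
    by apply/existsP; exists j; rewrite jC !inE jD orbT.
  apply/forallP => i; apply/implyP => iC; by rewrite /mult3 iC; case: (i \in D').
have hs3 : forall D : {set 'I_k}, j \in D -> succ_last C0 D C0 C0.
  move=> D' jD; apply/andP; split.
    by apply/existsP; exists j; rewrite jC !inE jD.
  apply/forallP => i; apply/implyP => iC; by rewrite /mult3 iC; case: (i \in D').
have jC' := negbTE jC.
case: (eqVneq A C0) => [->|nA]; case: (eqVneq B C0) => [->|nB];
  case: (eqVneq D C0)=> [->|nD]; rewrite /= ?jC' ?andbF ?andbT ?andFb ?eqxx //=.
- by case jD: (j \in D) => //=; rewrite lt0b hs.
- by case jB: (j \in B) => //=; rewrite lt0b hs2.
- by case jA: (j \in A) => //=; rewrite lt0b hs3.
Qed.

Lemma cube_le a b : (a <= b)%N -> (a ^ 3 <= b ^ 3)%N.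
Proof. by move=> h; rewrite leq_exp2r. Qed.

Theorem lemma2 (k : nat) (lambda : rat) (hk : (2 <= k)%N) (hlambda : (0 < lambda)%R)
  (x : {set 'I_k} -> nat) (hfull : x [set: 'I_k] = 0%N)
  (hS : (12 <= Stot x)%N) :
  exists i : 'I_k,
    ((Schunk x i)%:R / (2 * k ^ 3)%N%:R <= rate x)%R.
Proof.
have k0 : (0 < k)%N by apply: leq_trans hk.
have K3 : (8 <= k ^ 3)%N by rewrite (_ : 8 = 2 ^ 3)%N // cube_le.
set n0 := x set0.
pose mid := fun C : {set 'I_k} => (0 < #|C|) && (#|C| <= k - 2).
pose lst := fun C : {set 'I_k} => #|C| == k - 1.
set N := (\sum_A x A)%N.
have hSN : Stot x = (N + 1)%N by rewrite Stot_eq.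
set S := Stot x.
set nmid := (\sum_(C | mid C) x C)%N.
set nlast := (\sum_(C | lst C) x C)%N.
have hN : (N <= n0 + nmid + nlast)%N.
  have e0 : n0 = (\sum_(C | C == set0) x C)%N by rewrite big_pred1_eq.
  rewrite e0 /N /nmid /nlast (big_mkcond (fun C => C == set0)) (big_mkcond mid) (big_mkcond lst) -!big_split /=; apply: leq_sum => C _.
  case: eqP => [_|nC0]; first lia.
  case hm: (mid C); first lia.
  case hl: (lst C); first lia.
  suff -> : C = setT by rewrite hfull.
  have c0 : (0 < #|C|)%N by rewrite card_gt0; apply/eqP.
  have ck : (#|C| <= k)%N by move: (max_card (mem C)); rewrite card_ord.
  move: hm hl; rewrite /mid /lst c0 /= => /negbT hm /negbT hl.
  apply/eqP; rewrite eqEcard subsetT cardsT card_ord /=; lia.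
have [i _ imin] := @arg_minnP _ (Ordinal k0) xpredT (Schunk x) isT.
exists i; set m := Schunk x i.
have Spos : (0 < S)%N by lia.
have S3pos : (0 < S ^ 3)%N by rewrite expn_gt0 Spos.
have dpos : (0 < 2 * k ^ 3)%N by lia.
have h11 : (11 * S <= 12 * N)%N by lia.
have h11c : (11 ^ 3 * S ^ 3 <= 12 ^ 3 * N ^ 3)%N by rewrite -!expnMn cube_le.
case: (leqP (7 * N) (100 * nmid)) => hmid.
  have lb : (nmid%:R * (m%:R / S%:R) <= rate x)%R.
    apply: le_trans (rate_ge x mid).
    rewrite /nmid natr_sum mulr_suml; apply: ler_sum => C hC.
    rewrite ler_wpM2l ?ler0n //.
    move: (hC); rewrite /mid => /andP [c0 c2].
    have -> : dl_prob x C = single_prob x C.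
      by rewrite /dl_prob ifF ?c2 //; apply/negbTE; rewrite -lt0n.
    rewrite /single_prob ler_wpM2r ?invr_ge0 ?ler0n // ler_nat.
    have [j jC] := notin_ex (C := C) (ltac:(lia)).
    apply: leq_trans (imin j isT) _.
    rewrite /Schunk big_mkcond [X in (_ <= X)%N]big_mkcond /=; apply: leq_sum => A _.
    case jA: (j \in A) => //.
    suff -> : ~~ (A \subset C) by [].
    by apply/subsetPn; exists j.
  apply: le_trans lb; rewrite mulrA -natrM frac_le //.
  have h1 : (S <= 16 * nmid)%N by lia.
  have h2 : (16 * nmid <= nmid * (2 * k ^ 3))%N by rewrite mulnC leq_mul2l; lia.
  rewrite (mulnAC nmid) (mulnC _ m) leq_mul2l; apply/orP; right; lia.
case: (leqP (31 * N) (100 * n0)) => hemp.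
  have lb : (n0%:R * ((3 * (m * n0 * n0))%N%:R / (S ^ 3)%N%:R) <= rate x)%R.
    apply: le_trans (rate_ge1 x set0).
    rewrite ler_wpM2l ?ler0n //.
    rewrite /dl_prob cards0 eqxx /triple_prob -/S -natrX frac_le //.
    by rewrite leq_mul2r; apply/orP; right; exact: empty_bound.
  apply: le_trans lb; rewrite mulrA -natrM frac_le //.
  have c1 : (31 ^ 3 * N ^ 3 <= 100 ^ 3 * n0 ^ 3)%N by rewrite -!expnMn cube_le.
  have c2 : (S ^ 3 <= 48 * n0 ^ 3)%N by lia.
  have c3 : (48 * n0 ^ 3 <= 6 * n0 ^ 3 * k ^ 3)%N.
    have := leq_mul (leqnn (6 * n0 ^ 3)) K3; lia.
  have -> : (n0 * (3 * (m * n0 * n0)) * (2 * k ^ 3) = m * (6 * n0 ^ 3 * k ^ 3))%N.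
    rewrite !expnS expn0; lia.
  by rewrite leq_mul2l; apply/orP; right; apply: leq_trans c3.
have hl : (62 * N < 100 * nlast)%N by lia.
pose A := [set C : {set 'I_k} | #|C| == k - 1].
have cA : #|A| = k.
  by rewrite /A card_draws card_ord bin_sub // bin1.
have [C0 C0A cmE] := eq_bigmax_cond x (ltac:(rewrite cA; exact k0) : (0 < #|A|)%N).
set c := x C0.
have hlc : (nlast <= k * c)%N.
  have -> : nlast = (\sum_(C in A) x C)%N by apply: eq_bigl => C; rewrite inE.
  apply: (@leq_trans (\sum_(C in A) c)%N); last by rewrite sum_nat_const cA.
  apply: leq_sum => C CA.
  rewrite /c -cmE; exact: leq_bigmax_cond.
have C0k : #|C0| = (k - 1)%N by move: C0A; rewrite inE => /eqP.
have [j jC] := notin_ex (C := C0) (ltac:(lia)).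
have lb : (c%:R * ((3 * (c * c * Schunk x j))%N%:R / (S ^ 3)%N%:R) <= rate x)%R.
  apply: le_trans (rate_ge1 x C0).
  rewrite ler_wpM2l ?ler0n //.
  have -> : dl_prob x C0 = triple_prob x (succ_last C0).
    rewrite /dl_prob C0k ifF; last by apply/negbTE; lia.
    rewrite ifF; last by apply/negbTE; lia.
    by rewrite eqxx.
  rewrite /triple_prob -/S -natrX frac_le //.
  by rewrite leq_mul2r last_bound ?orbT.
apply: le_trans lb; rewrite mulrA -natrM frac_le //.
have mj : (m <= Schunk x j)%N := imin j isT.
have c1 : (62 ^ 3 * N ^ 3 <= 100 ^ 3 * (k * c) ^ 3)%N.
  by rewrite -!expnMn cube_le //; lia.
have c2 : (S ^ 3 <= 6 * (k * c) ^ 3)%N by lia.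
apply: (@leq_trans (m * (6 * (k * c) ^ 3))).
  by rewrite leq_mul2l c2 orbT.
have -> : (c * (3 * (c * c * Schunk x j)) * (2 * k ^ 3) = Schunk x j * (6 * (k * c) ^ 3))%N.
  rewrite !expnS expn0; lia.
by rewrite leq_mul2r mj orbT.
Qed.
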